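(* Let $G_1,\dots,G_n,H$ be non-trivial groups such that each $G_i$ is centreless and directly indecomposable, and such that $H$ has no direct factor isomorphic to any $G_i$. Let $G=G_1\times\cdots\times G_n$. Then the automorphisms of $G\times H$ are exactly the maps $(g,h)\mapsto(\alpha(g),\gamma(g)\delta(h))$ with $\alpha\in\operatorname{Aut}(G)$, $\delta\in\operatorname{Aut}(H)$ and $\gamma\in\operatorname{Hom}(G,Z(H))$. In particular, $1\times H$ is characteristic in $G\times H$.
   Context: A group $A$ is directly indecomposable if $A\cong B\times C$ implies $B=1$ or $C=1$. $H$ has a direct factor isomorphic to $A$ if $H\cong A\times N$ for some group $N$. *)

(* Defs.v *)
From Stdlib Require Import FunctionalExtensionality.
From mathcomp Require Import all_boot.

Set Implicit Arguments.
Unset Strict Implicit.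

Record Grp := MkGrp {
  gcar :> Type;
  gmul : gcar -> gcar -> gcar;
  gone : gcar;
  ginv : gcar -> gcar;
  gassoc : forall x y z, gmul x (gmul y z) = gmul (gmul x y) z;
  gone_l : forall x, gmul gone x = x;
  ginv_l : forall x, gmul (ginv x) x = gone
}.

Arguments gmul {g}.
Arguments gone {g}.
Arguments ginv {g}.

Definition prodG (B C : Grp) : Grp.
Proof.
refine (@MkGrp (B * C)%type
  (fun p q => (gmul p.1 q.1, gmul p.2 q.2)) (gone, gone)
  (fun p => (ginv p.1, ginv p.2)) _ _ _).
- by move=> [? ?] [? ?] [? ?] /=; rewrite !gassoc.
- by move=> [? ?] /=; rewrite !gone_l.
- by move=> [? ?] /=; rewrite !ginv_l.
Defined.

Definition bigprodG (n : nat) (G : 'I_n -> Grp) : Grp.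
Proof.
refine (@MkGrp (forall i : 'I_n, G i)
  (fun x y i => gmul (x i) (y i)) (fun i => gone)
  (fun x i => ginv (x i)) _ _ _).
- by move=> x y z; apply: functional_extensionality_dep => i; rewrite gassoc.
- by move=> x; apply: functional_extensionality_dep => i; rewrite gone_l.
- by move=> x; apply: functional_extensionality_dep => i; rewrite ginv_l.
Defined.

Definition is_hom (A B : Grp) (f : A -> B) : Prop :=
  forall x y : A, f (gmul x y) = gmul (f x) (f y).

Definition bijective_map (A B : Type) (f : A -> B) : Prop :=
  (forall x y, f x = f y -> x = y) /\ (forall y, exists x, f x = y).

Definition is_iso (A B : Grp) (f : A -> B) : Prop := is_hom f /\ bijective_map f.

Definition isomorphic (A B : Grp) : Prop := exists f : A -> B, is_iso f.

Definition is_aut (A : Grp) (f : A -> A) : Prop := is_iso f.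

Definition trivialG (A : Grp) : Prop := forall x : A, x = gone.

Definition nontrivialG (A : Grp) : Prop := exists x : A, x <> gone.

Definition central (A : Grp) (z : A) : Prop := forall x : A, gmul z x = gmul x z.

Definition centreless (A : Grp) : Prop := forall z : A, central z -> z = gone.

Definition directly_indecomposable (A : Grp) : Prop :=
  forall B C : Grp, isomorphic A (prodG B C) -> trivialG B \/ trivialG C.

Definition has_direct_factor (H A : Grp) : Prop :=
  exists N : Grp, isomorphic H (prodG A N).

Definition is_hom_to_centre (G H : Grp) (g : G -> H) : Prop :=
  is_hom g /\ forall x : G, central (g x).

(* Main.v *)
Require Import Defs.
From mathcomp Require Import all_boot.
From Stdlib Require Import FunctionalExtensionality ProofIrrelevance ClassicalEpsilon.
Set Implicit Arguments. Unset Strict Implicit.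

Section GL.
Variable A : Grp.
Implicit Types x y z : A.
Lemma Xginv_r x : gmul x (ginv x) = gone.
Proof.
rewrite -{1}(gone_l (gmul x (ginv x))) -(ginv_l (ginv x)) -!gassoc.
by rewrite (gassoc (ginv x) x) ginv_l gone_l ginv_l.
Qed.
Lemma Xmulg1 x : gmul x gone = x.
Proof. by rewrite -(ginv_l x) gassoc Xginv_r gone_l. Qed.
Lemma XmulgI x y z : gmul x y = gmul x z -> y = z.
Proof. by move=> E; rewrite -(gone_l y) -(ginv_l x) -gassoc E gassoc ginv_l gone_l. Qed.
Lemma XmulIg x y z : gmul y x = gmul z x -> y = z.
Proof. by move=> E; rewrite -(Xmulg1 y) -(Xginv_r x) gassoc E -gassoc Xginv_r Xmulg1. Qed.
Lemma XginvK x : ginv (ginv x) = x.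
Proof. by apply: (@XmulIg (ginv x)); rewrite ginv_l Xginv_r. Qed.
Lemma XginvM x y : ginv (gmul x y) = gmul (ginv y) (ginv x).
Proof. apply: (@XmulIg (gmul x y)); rewrite ginv_l gassoc -(gassoc (ginv y)) ginv_l Xmulg1 ginv_l //. Qed.
Lemma Xginv1 : ginv (gone : A) = gone.
Proof. by rewrite -{2}(ginv_l gone) Xmulg1. Qed.
End GL.

Section Hom.
Variables A B : Grp.
Variable f : A -> B.
Hypothesis hf : is_hom f.
Lemma Xhom1 : f gone = gone.
Proof. apply: (@XmulgI _ (f gone)); by rewrite -hf gone_l Xmulg1. Qed.
Lemma XhomV x : f (ginv x) = ginv (f x).
Proof. apply: (@XmulIg _ (f x)); by rewrite -hf ginv_l ginv_l Xhom1. Qed.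
End Hom.

Lemma iso_inv (A B : Grp) (f : A -> B) : is_iso f ->
  exists g : B -> A, [/\ is_iso g, forall x, g (f x) = x & forall y, f (g y) = y].
Proof.
move=> [hf [inj sur]].
pose g y := proj1_sig (constructive_indefinite_description _ (sur y)).
have fg y : f (g y) = y by rewrite /g; case: constructive_indefinite_description.
have gf x : g (f x) = x by apply: inj; rewrite fg.
exists g; split=> //; split.
- by move=> x y; apply: inj; rewrite hf !fg.
- split; first by move=> x y E; rewrite -(fg x) -(fg y) E.
  by move=> y; exists (f y).
Qed.

Definition subG (A : Grp) (S : A -> Prop) (Hm : forall x y, S x -> S y -> S (gmul x y))
  (H1 : S gone) (Hi : forall x, S x -> S (ginv x)) : Grp.
Proof.
refine (@MkGrp {x : A | S x} (fun p q => exist _ (gmul (proj1_sig p) (proj1_sig q)) (Hm _ _ (proj2_sig p) (proj2_sig q)))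
  (exist _ gone H1) (fun p => exist _ (ginv (proj1_sig p)) (Hi _ (proj2_sig p))) _ _ _).
- by move=> [x ?] [y ?] [z ?]; apply: eq_sig_hprop => /=; [move=> *; apply: proof_irrelevance|rewrite gassoc].
- by move=> [x ?]; apply: eq_sig_hprop => /=; [move=> *; apply: proof_irrelevance|rewrite gone_l].
- by move=> [x ?]; apply: eq_sig_hprop => /=; [move=> *; apply: proof_irrelevance|rewrite ginv_l].
Defined.

Lemma subG_eq (A : Grp) S Hm H1 Hi (p q : @subG A S Hm H1 Hi) : proj1_sig p = proj1_sig q -> p = q.
Proof. by move=> E; apply: eq_sig_hprop => // *; apply: proof_irrelevance. Qed.

Definition emb n (Gs : 'I_n -> Grp) (i : 'I_n) (y : Gs i) : bigprodG Gs :=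
  fun j => match i =P j with ReflectT E => eq_rect i (fun j => gcar (Gs j)) y j E | ReflectF _ => gone end.

Lemma emb_i n (Gs : 'I_n -> Grp) i (y : Gs i) : emb y i = y.
Proof. rewrite /emb; case: eqP => [E|//]; by rewrite (eq_irrelevance E erefl). Qed.

Lemma emb_hom n (Gs : 'I_n -> Grp) i : is_hom (@emb n Gs i).
Proof.
move=> x y; apply: functional_extensionality_dep => j /=; rewrite /emb.
case: eqP => [E|_]; last by rewrite gone_l.
by destruct E.
Qed.

Lemma emb_comm n (Gs : 'I_n -> Grp) i (y : Gs i) (x : bigprodG Gs) : x i = gone ->
  gmul x (emb y) = gmul (emb y) x.
Proof.
move=> Hx; apply: functional_extensionality_dep => j /=; rewrite /emb.
case: eqP => [E|_]; last by rewrite gone_l Xmulg1.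
by destruct E; rewrite Hx gone_l Xmulg1.
Qed.
Lemma char_lemma n (Gs : 'I_n -> Grp) (H : Grp) :
  (forall i, centreless (Gs i)) ->
  (forall i, directly_indecomposable (Gs i)) ->
  (forall i, ~ has_direct_factor H (Gs i)) ->
  forall th : prodG (bigprodG Gs) H -> prodG (bigprodG Gs) H, is_aut th ->
  forall h : H, (th (gone, h)).1 = gone.
Proof.
move=> cl ind nof th hth h.
have [ph [[hph _] phth thph]] := iso_inv hth.
have [thhom _] := hth.
apply: functional_extensionality_dep => i.
pose P (k : prodG (bigprodG Gs) H) : Gs i := (th k).1 i.
have Phom : is_hom P by move=> k k'; rewrite /P thhom.
have PM a b c d : gmul (P (a, b)) (P (c, d)) = P (gmul a c, gmul b d) by rewrite -Phom.
have P1 : P (gone, gone) = gone := Xhom1 Phom.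
have PV a b : P (ginv a, ginv b) = ginv (P (a, b)) := XhomV Phom (a, b).
have Psur x : P (ph (emb x, gone)) = x by rewrite /P thph /= emb_i.
have Pdec a b : P (a, b) = gmul (P (a, gone)) (P (gone, b)) by rewrite PM gone_l Xmulg1.
have comm g k : gmul (P (g, gone)) (P (gone, k)) = gmul (P (gone, k)) (P (g, gone)).
  by rewrite !PM !gone_l !Xmulg1.
pose SB (y : Gs i) := exists g, P (g, gone) = y.
pose SD (y : Gs i) := exists k, P (gone, k) = y.
have SBm x y : SB x -> SB y -> SB (gmul x y).
  by move=> [g <-] [g' <-]; exists (gmul g g'); rewrite PM gone_l.
have SB1 : SB gone by exists gone.
have SBi x : SB x -> SB (ginv x) by move=> [g <-]; exists (ginv g); rewrite -PV Xginv1.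
have SDm x y : SD x -> SD y -> SD (gmul x y).
  by move=> [g <-] [g' <-]; exists (gmul g g'); rewrite PM gone_l.
have SD1 : SD gone by exists gone.
have SDi x : SD x -> SD (ginv x) by move=> [g <-]; exists (ginv g); rewrite -PV Xginv1.
pose B := subG SBm SB1 SBi.
pose D := subG SDm SD1 SDi.
have cen z : SB z -> SD z -> z = gone.
  move=> [g Eg] [k Ek]; apply: cl => x.
  rewrite -(Psur x); case: (ph _) => a b; rewrite Pdec.
  rewrite gassoc -{1}Ek -comm Ek -gassoc -{1}Eg comm Eg gassoc //.
have isoD : isomorphic (Gs i) (prodG B D).
  pose F (p : prodG B D) : Gs i := gmul (proj1_sig p.1) (proj1_sig p.2).
  suff [hF [injF surF]] : is_iso F.
    have [g [hg _ _]] := iso_inv (conj hF (conj injF surF)); by exists g.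
  split; last split.
  - move=> [[x1 [g1 E1]] [x2 [k1 E2]]] [[y1 [g2 E3]] [y2 [k2 E4]]].
    rewrite /F /= -E1 -E2 -E3 -E4 -!gassoc; congr gmul; rewrite !gassoc; congr gmul.
    by rewrite comm.
  - move=> [[x1 sx1] [x2 sx2]] [[y1 sy1] [y2 sy2]]; rewrite /F /= => E.
    have E1 : gmul (ginv y1) x1 = gmul y2 (ginv x2).
      apply: (@XmulIg _ x2); rewrite -gassoc E -!gassoc ginv_l Xmulg1 gassoc ginv_l gone_l //.
    have z1 : gmul (ginv y1) x1 = gone.
      apply: (cen _ (SBm _ _ (SBi _ sy1) sx1)); rewrite E1; exact: (SDm _ _ sy2 (SDi _ sx2)).
    have ex1 : x1 = y1 by apply: (@XmulgI _ (ginv y1)); rewrite z1 ginv_l.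
    have ex2 : x2 = y2.
      by apply: (@XmulIg _ (ginv x2)); rewrite Xginv_r -E1 z1.
    by subst; congr pair; apply: subG_eq.
  - move=> y; rewrite -(Psur y); case: (ph _) => a b.
    by exists (exist _ _ (ex_intro _ a erefl) : B, exist _ _ (ex_intro _ b erefl) : D); rewrite /F /= -Pdec.
case: (ind i B D isoD) => [trB|trD]; last first.
  by have := f_equal (@proj1_sig _ _) (trD (exist _ (P (gone, h)) (ex_intro _ h erefl) : D)).
exfalso; apply: (nof i).
have PB g : P (g, gone) = gone.
  by have := f_equal (@proj1_sig _ _) (trB (exist _ (P (g, gone)) (ex_intro _ g erefl) : B)).
pose Q (m : H) := P (gone, m).
have Qhom : is_hom Q by move=> m m'; rewrite /Q PM gone_l.
pose SN (m : H) := Q m = gone.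
have SNm x y : SN x -> SN y -> SN (gmul x y) by rewrite /SN Qhom => -> ->; rewrite gone_l.
have SN1 : SN gone by apply: Xhom1.
have SNi x : SN x -> SN (ginv x) by rewrite /SN (XhomV Qhom) => ->; rewrite Xginv1.
pose N := subG SNm SN1 SNi.
exists N.
pose s (y : Gs i) : H := (ph (emb y, gone)).2.
have shom : is_hom s.
  move=> y y'; rewrite /s (emb_hom y y') -{1}(gone_l (gone : H)).
  by rewrite (hph (emb y, gone) (emb y', gone)).
have Qs y : Q (s y) = y.
  rewrite -{2}(Psur y) /Q /s; case: (ph _) => a b /=.
  by rewrite (Pdec a b) PB gone_l.
have commN m y : Q m = gone -> gmul m (s y) = gmul (s y) m.
  move=> Qm.
  have E : gmul (th (gone, m)) ((emb y, gone) : prodG (bigprodG Gs) H) = gmul ((emb y, gone) : prodG (bigprodG Gs) H) (th (gone, m)).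
    have -> : th (gone, m) = ((th (gone, m)).1, (th (gone, m)).2) by case: (th _).
    rewrite /=; congr pair; last by rewrite gone_l Xmulg1.
    by apply: emb_comm.
  have := f_equal (fun k => (ph k).2) E; rewrite !hph phth //.
pose F (p : prodG (Gs i) N) : H := gmul (s p.1) (proj1_sig p.2).
suff hF : is_iso F.
  have [g [hg _ _]] := iso_inv hF; by exists g.
split; last split.
- move=> [y1 [m1 sm1]] [y2 [m2 sm2]]; rewrite /F /= shom -!gassoc; congr gmul.
  by rewrite !gassoc commN.
- move=> [y1 [m1 sm1]] [y2 [m2 sm2]]; rewrite /F /= => E.
  have := f_equal Q E; rewrite !Qhom !Qs sm1 sm2 !Xmulg1 => ey; subst y2.
  have em := XmulgI E; subst m2; congr pair; exact: subG_eq.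
- move=> k; pose y := Q k.
  have sm : SN (gmul (ginv (s y)) k) by rewrite /SN Qhom (XhomV Qhom) Qs ginv_l.
  exists (y, exist _ _ sm : N); rewrite /F /= gassoc Xginv_r gone_l //.
Qed.
Lemma prod_mulE (B C : Grp) (p q : prodG B C) : gmul p q = (gmul p.1 q.1, gmul p.2 q.2).
Proof. by []. Qed.

Theorem mainTheorem17 (n : nat) (Gs : 'I_n -> Grp) (H : Grp) :
  (forall i, nontrivialG (Gs i)) ->
  nontrivialG H ->
  (forall i, centreless (Gs i)) ->
  (forall i, directly_indecomposable (Gs i)) ->
  (forall i, ~ has_direct_factor H (Gs i)) ->
  let G := bigprodG Gs in
  (forall phi : prodG G H -> prodG G H,
     is_aut phi <->
     exists (alpha : G -> G) (gamma : G -> H) (delta : H -> H),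
       [/\ is_aut alpha, is_aut delta, is_hom_to_centre gamma &
           forall (g : G) (h : H),
             phi (g, h) = (alpha g, gmul (gamma g) (delta h))])
  /\
  (* in particular 1 x H is characteristic in G x H *)
  (forall phi : prodG G H -> prodG G H, is_aut phi ->
     forall p : prodG G H, p.1 = gone <-> (phi p).1 = gone).
Proof.
move=> _ _ cl ind nof G.
have ch := char_lemma cl ind nof.
have fwd : forall phi : prodG G H -> prodG G H, is_aut phi ->
     exists (alpha : G -> G) (gamma : G -> H) (delta : H -> H),
       [/\ is_aut alpha, is_aut delta, is_hom_to_centre gamma &
           forall (g : G) (h : H),
             phi (g, h) = (alpha g, gmul (gamma g) (delta h))].
  move=> phi hphi; have [hom [inj sur]] := hphi.
  have [psi [hpsi psph phps]] := iso_inv hphi.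
  have [psihom _] := hpsi.
  have c1 := ch phi hphi; have c2 := ch psi hpsi.
  have homE a b c d : gmul (phi (a, b)) (phi (c, d)) = phi (gmul a c, gmul b d) by rewrite -hom.
  have homE1 a b c d : gmul (phi (a, b)).1 (phi (c, d)).1 = (phi (gmul a c, gmul b d)).1 by rewrite -homE.
  have homE2 a b c d : gmul (phi (a, b)).2 (phi (c, d)).2 = (phi (gmul a c, gmul b d)).2 by rewrite -homE.
  pose al (g : G) := (phi (g, gone)).1.
  pose ga (g : G) := (phi (g, gone)).2.
  pose de (h : H) := (phi (gone, h)).2.
  have E (g : G) (h : H) : phi (g, h) = (al g, gmul (ga g) (de h)).
    have -> : ((g, h) : prodG G H) = gmul ((g, gone) : prodG G H) (gone, h).
      change (((g, h) : prodG G H) = (@gmul G g gone, @gmul H gone h)); by rewrite Xmulg1 gone_l.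
    by rewrite hom prod_mulE c1 Xmulg1.
  have alhom : is_hom al by move=> g g'; rewrite /al homE1 gone_l.
  have gahom : is_hom ga by move=> g g'; rewrite /ga homE2 gone_l.
  have dehom : is_hom de by move=> h h'; rewrite /de homE2 gone_l.
  have ga1 : ga gone = gone := Xhom1 gahom.
  have desur x : de ((psi (gone, x)).2) = x.
    move: (c2 x) (phps (gone, x)); case: (psi _) => a b /= ->; rewrite E => -[_ <-].
    by rewrite ga1 gone_l.
  exists al, ga, de; split=> //.
  - split=> //; split.
    + move=> g g' e.
      pose t := gmul (ginv (ga g)) (ga g').
      have e2 : phi (g', gone) = gmul (phi (g, gone)) (gone, t).
        have de1 : de gone = gone := Xhom1 dehom.
        rewrite !E prod_mulE; cbn [fst snd]; rewrite e de1 !Xmulg1; congr pair.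
        by rewrite /t gassoc Xginv_r gone_l.
      have := f_equal (fun k => (psi k).1) e2; rewrite psph psihom prod_mulE psph c2.
      by cbn [fst snd]; rewrite Xmulg1 => ->.
    + move=> y; exists (psi (y, gone)).1.
      move: (phps (y, gone)); case: (psi _) => a b; rewrite E => -[-> _] //.
  - split=> //; split.
    + move=> h h' e; have : phi (gone, h) = phi (gone, h') by rewrite !E e.
      by move/inj => -[].
    + by move=> y; exists (psi (gone, y)).2.
  - split=> // g x; rewrite -(desur x); set b := (psi _).2.
    have : gmul (phi (g, gone)) (phi (gone, b)) = gmul (phi (gone, b)) (phi (g, gone)).
      by rewrite !homE !gone_l !Xmulg1.
    by move/(f_equal snd).
split.
- move=> phi; split; first exact: fwd.
  move=> [al [ga [de [[alhom [alinj alsur]] [dehom [deinj desur]] [gahom gac] E]]]].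
  split; last split.
  + move=> [g h] [g' h'] /=; rewrite !E /= alhom gahom dehom; congr pair.
    rewrite -!gassoc; congr gmul; rewrite !gassoc; congr gmul; exact: gac.
  + move=> [g h] [g' h']; rewrite !E => -[e1 e2].
    have eg := alinj _ _ e1; subst g'; by rewrite (deinj _ _ (XmulgI e2)).
  + move=> [a b]; have [g eg] := alsur a; have [h eh] := desur (gmul (ginv (ga g)) b).
    by exists (g, h); rewrite E eg eh gassoc Xginv_r gone_l.
- move=> phi hphi [g h]; have [al [ga [de [[alhom [alinj _]] _ _ E]]]] := fwd phi hphi.
  rewrite E /=; split; first by move=> ->; exact: (Xhom1 alhom).
  by move=> e; apply: alinj; rewrite e (Xhom1 alhom).
Qed.
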